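(* Let $R$ be any unital ring and $A\in GL_n(R)$. If some entry of $A$ is an idempotent, then $A$ can be reduced by a finite sequence of elementary row and column operations to a matrix of the form $\begin{bmatrix}1&0\\0&A'\end{bmatrix}$, i.e. with $1,1$ entry equal to $1$ and all other entries of the first row and first column equal to $0$.
   Context: An elementary row (resp. column) operation adds a left (resp. right) multiple by an element of $R$ of one row (resp. column) to a different row (resp. column); equivalently, multiplication on the left (resp. right) by a transvection $I+re_{ij}$ with $i\neq j$, $r\in R$. *)

(* Defs.v *)
From HB Require Import structures.
From mathcomp Require Import all_boot all_order all_algebra.
Set Implicit Arguments. Unset Strict Implicit. Unset Printing Implicit Defensive.
Import GRing.Theory.
Local Open Scope ring_scope.

(* The transvection I + r e_ij (r placed at entry (i,j)); over a possibly
   noncommutative ring, (r *: M) k l = r * M k l. *)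
Definition transvection (R : pzRingType) (n : nat) (i j : 'I_n) (r : R) : 'M[R]_n :=
  1%:M + r *: delta_mx i j.

Definition invertible_mx (R : pzRingType) (n : nat) (A : 'M[R]_n) : Prop :=
  exists B : 'M[R]_n, A *m B = 1%:M /\ B *m A = 1%:M.

Inductive elem_reduces (R : pzRingType) (n : nat) : 'M[R]_n -> 'M[R]_n -> Prop :=
| er_refl A : elem_reduces A A
| er_row A B (i j : 'I_n) (r : R) :
    i != j -> elem_reduces (transvection i j r *m A) B -> elem_reduces A B
| er_col A B (i j : 'I_n) (r : R) :
    i != j -> elem_reduces (A *m transvection i j r) B -> elem_reduces A B.

(* Main.v *)
Require Import Defs.
From HB Require Import structures.
From mathcomp Require Import all_boot all_order all_algebra.
Import GRing.Theory.
Local Open Scope ring_scope.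

Lemma row_op_entry (R : pzRingType) n (i j : 'I_n) r (A : 'M[R]_n) k l :
  (transvection i j r *m A) k l = if k == i then A k l + r * A j l else A k l.
Proof.
rewrite /transvection mulmxDl mul1mx mxE [X in _ + X]mxE.
rewrite (bigD1 j) //= big1 ?addr0; last first.
  by move=> m /negbTE mj; rewrite !mxE mj andbF mulr0 mul0r.
rewrite !mxE eqxx andbT; case: eqP => _; first by rewrite mulr1.
by rewrite mulr0 mul0r addr0.
Qed.

Lemma col_op_entry (R : pzRingType) n (i j : 'I_n) r (A : 'M[R]_n) k l :
  (A *m transvection i j r) k l = if l == j then A k l + A k i * r else A k l.
Proof.
rewrite /transvection mulmxDr mulmx1 mxE [X in _ + X]mxE.
rewrite (bigD1 i) //= big1 ?addr0; last first.
  by move=> m /negbTE mj; rewrite !mxE mj /= mulr0 mulr0.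
rewrite !mxE eqxx /=; case: eqP => _; first by rewrite mulr1.
by rewrite mulr0 mulr0 addr0.
Qed.

Lemma transvK (R : pzRingType) n (i j : 'I_n) (r : R) : i != j ->
  transvection i j r *m transvection i j (- r) = 1%:M.
Proof.
move=> ij; apply/matrixP => k l; rewrite col_op_entry.
case: eqP => [->|/eqP lj].
  rewrite !mxE (negbTE ij) eqxx andbT andbF mulr0 addr0.
  by case: (k == i); rewrite ?mulr1 ?mul1r ?addrK // mulr0 mul0r !addr0.
by rewrite !mxE (negbTE lj) andbF mulr0 addr0.
Qed.

Lemma er_trans (R : pzRingType) n (A B C : 'M[R]_n) :
  elem_reduces A B -> elem_reduces B C -> elem_reduces A C.
Proof.
elim=> // {A B} A B i j r ij _ IH /IH; [exact: er_row|exact: er_col].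
Qed.

Lemma er_rinv (R : pzRingType) n (A B : 'M[R]_n) :
  elem_reduces A B -> (exists C, A *m C = 1%:M) -> exists C, B *m C = 1%:M.
Proof.
elim=> // {A B} A B i j r ij _ IH [C AC]; apply: IH.
  exists (C *m transvection i j (-r)).
  by rewrite mulmxA -(mulmxA _ A) AC mulmx1 transvK.
exists (transvection i j (-r) *m C).
by rewrite mulmxA -(mulmxA A) transvK // mulmx1.
Qed.

Lemma er_r (R : pzRingType) n (A B : 'M[R]_n) i j r : i != j ->
  elem_reduces (transvection i j r *m A) B -> elem_reduces A B.
Proof. exact: er_row. Qed.
Lemma er_c (R : pzRingType) n (A B : 'M[R]_n) i j r : i != j ->
  elem_reduces (A *m transvection i j r) B -> elem_reduces A B.
Proof. exact: er_col. Qed.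

Lemma swap_row (R : pzRingType) n (A : 'M[R]_n.+1) i :
  exists A', elem_reduces A A' /\ forall l, A' ord0 l = A i l.
Proof.
have [-> | i0] := eqVneq i ord0; first by exists A; split => //; apply: er_refl.
have i0' : ord0 != i by rewrite eq_sym.
set A1 := transvection ord0 i 1 *m A.
set A2 := transvection i ord0 (-1) *m A1.
exists (transvection ord0 i 1 *m A2); split.
  apply: (@er_r _ _ _ _ _ _ 1 i0'); apply: (@er_r _ _ _ _ _ _ (-1) i0); apply: (@er_r _ _ _ _ _ _ 1 i0'); rewrite -/A1 -/A2; exact: er_refl.
move=> l; rewrite /A2 /A1 !row_op_entry eqxx (negbTE i0) (negbTE i0') eqxx.
by rewrite !mul1r mulN1r addrC subrK.
Qed.

Lemma swap_col (R : pzRingType) n (A : 'M[R]_n.+1) j :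
  exists A', elem_reduces A A' /\ forall k, A' k ord0 = A k j.
Proof.
have [-> | i0] := eqVneq j ord0; first by exists A; split => //; apply: er_refl.
have i0' : ord0 != j by rewrite eq_sym.
set A1 := A *m transvection j ord0 1.
set A2 := A1 *m transvection ord0 j (-1).
exists (A2 *m transvection j ord0 1); split.
  apply: (@er_c _ _ _ _ _ _ 1 i0); apply: (@er_c _ _ _ _ _ _ (-1) i0'); apply: (@er_c _ _ _ _ _ _ 1 i0); rewrite -/A1 -/A2; exact: er_refl.
move=> k; rewrite /A2 /A1 !col_op_entry eqxx (negbTE i0) (negbTE i0') eqxx.
by rewrite !mulr1 mulrN1 addrC subrK.
Qed.

Lemma col_sum (R : pzRingType) n (s : seq 'I_n.+1) (r : 'I_n.+1 -> R) :
  forall A : 'M[R]_n.+1, (forall k, k \in s -> k != ord0) ->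
  exists A', elem_reduces A A' /\
    A' ord0 ord0 = A ord0 ord0 + \sum_(k <- s) A ord0 k * r k.
Proof.
elim: s => [|k s IH] A hs.
  by exists A; split; [apply: er_refl | rewrite big_nil addr0].
have k0 : k != ord0 by apply: hs; rewrite mem_head.
have [A' [h1 h2]] := IH (A *m transvection k ord0 (r k))
   (fun k' h => hs k' (ltac:(by rewrite in_cons h orbT))).
exists A'; split; first exact: (@er_c _ _ _ _ _ _ (r k) k0).
rewrite h2 big_cons col_op_entry eqxx addrA; congr (_ + _).
apply: eq_big_seq => k' hk; have /negbTE k'0 : k' != ord0 by apply: hs; rewrite in_cons hk orbT.
by rewrite col_op_entry k'0.
Qed.

Lemma unit_to_one (R : pzRingType) m (A : 'M[R]_m.+2) (u v : R) :
  A ord0 ord0 = u -> u * v = 1 ->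
  exists A', elem_reduces A A' /\ A' ord0 ord0 = 1.
Proof.
move=> Au uv.
set j1 : 'I_m.+2 := lift ord0 ord0.
have j10 : j1 != ord0 by rewrite eq_sym neq_lift.
have j10' : ord0 != j1 by rewrite neq_lift.
set s := v * (1 - u - A ord0 j1).
set A1 := A *m transvection ord0 j1 s.
exists (A1 *m transvection j1 ord0 1); split.
  apply: (@er_c _ _ _ _ _ _ s j10'); apply: (@er_c _ _ _ _ _ _ 1 j10); exact: er_refl.
rewrite col_op_entry eqxx /A1 !col_op_entry.
rewrite (negbTE j10') eqxx Au mulr1.
rewrite /s mulrA uv mul1r [A ord0 j1 + _]addrC subrK addrC subrK //.
Qed.

Lemma clear_row (R : pzRingType) n (s : seq 'I_n.+1) :
  forall A : 'M[R]_n.+1, A ord0 ord0 = 1 -> (forall k, k \in s -> k != ord0) ->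
  exists A', elem_reduces A A' /\ A' ord0 ord0 = 1 /\
    forall k, k != ord0 -> A' ord0 k = if k \in s then 0 else A ord0 k.
Proof.
elim: s => [|k s IH] A A1 hs.
  by exists A; split; [apply: er_refl | split].
have k0 : k != ord0 by apply: hs; rewrite mem_head.
have k0' : ord0 != k by rewrite eq_sym.
have [A' [h1 [h2 h3]]] := IH (A *m transvection ord0 k (- A ord0 k))
   (ltac:(by rewrite col_op_entry eq_sym (negbTE k0)))
   (fun k' h => hs k' (ltac:(by rewrite in_cons h orbT))).
exists A'; split; first exact: (@er_c _ _ _ _ _ _ _ k0' h1).
split => // k' k'0; rewrite h3 // in_cons.
case: (k' \in s); first by rewrite orbT.
rewrite orbF col_op_entry; case: eqP => // ->.
by rewrite A1 mul1r addrN.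
Qed.

Lemma clear_col (R : pzRingType) n (s : seq 'I_n.+1) :
  forall A : 'M[R]_n.+1, A ord0 ord0 = 1 ->
  (forall j, j != ord0 -> A ord0 j = 0) -> (forall k, k \in s -> k != ord0) ->
  exists A', elem_reduces A A' /\ A' ord0 ord0 = 1 /\
    (forall j, j != ord0 -> A' ord0 j = 0) /\
    forall k, k != ord0 -> A' k ord0 = if k \in s then 0 else A k ord0.
Proof.
elim: s => [|k s IH] A A1 Ar hs.
  by exists A; split; [apply: er_refl | split].
have k0 : k != ord0 by apply: hs; rewrite mem_head.
have k0' : ord0 != k by rewrite eq_sym.
have [A' [h1 [h2 [h3 h4]]]] := IH (transvection k ord0 (- A k ord0) *m A)
   (ltac:(by rewrite row_op_entry (negbTE k0')))
   (fun j hj => ltac:(by rewrite row_op_entry (negbTE k0') Ar))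
   (fun k' h => hs k' (ltac:(by rewrite in_cons h orbT))).
exists A'; split; first exact: (@er_r _ _ _ _ _ _ _ k0 h1).
split => //; split => // k' k'0; rewrite h4 // in_cons.
case: (k' \in s); first by rewrite orbT.
rewrite orbF row_op_entry; case: eqP => // ->.
by rewrite A1 mulr1 addrN.
Qed.

Lemma unit_aux (R : pzRingType) (e b : R) : e * e = e ->
  (e + (1 - e * b) * (1 - e)) * (1 + e * b * (1 - e)) = 1.
Proof.
move=> ee.
set c := e * b * (1 - e).
have -> : e + (1 - e * b) * (1 - e) = 1 - c.
  rewrite mulrBl mul1r /c -mulrA.
  by rewrite addrA [e + _]addrC subrK.
have cc : c * c = 0.
  by rewrite /c -!mulrA [(1 - e) * _]mulrA mulrBl mul1r ee subrr mul0r !mulr0.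
rewrite mulrDr mulr1 mulrBl mul1r cc subr0.
by rewrite subrK.
Qed.

Theorem lemma2p3 (R : pzRingType) (n : nat) (A : 'M[R]_n.+1) :
  invertible_mx A ->
  (exists i j : 'I_n.+1, A i j * A i j = A i j) ->
  exists B : 'M[R]_n.+1,
    elem_reduces A B /\
    B ord0 ord0 = 1 /\
    (forall j : 'I_n.+1, j != ord0 -> B ord0 j = 0) /\
    (forall i : 'I_n.+1, i != ord0 -> B i ord0 = 0).
Proof.
move=> [C [AC _]] [i [j ee]].
case: n A C AC i j ee => [|m] A C AC i j ee.
  exists A; split; first exact: er_refl.
  split; last by split => k; rewrite (ord1 k) eqxx.
  move: ee; rewrite (ord1 i) (ord1 j) => ee.
  have h : A ord0 ord0 * C ord0 ord0 = 1.
    by move/matrixP: AC => /(_ ord0 ord0); rewrite !mxE big_ord1.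
  by rewrite -h -{1}(mulr1 (A _ _)) -h mulrA ee.
have [A1 [r1 h1]] := swap_row _ _ A i.
have [A2 [r2 h2]] := swap_col _ _ A1 j.
have r12 := er_trans _ _ _ _ _ r1 r2.
have [C2 AC2] := er_rinv _ _ _ _ r12 (ex_intro _ C AC).
set e := A i j.
have e2 : A2 ord0 ord0 = e by rewrite h2 h1.
set s := [seq k <- index_enum 'I_m.+2 | k != ord0].
have hs : forall k, (k \in s) = (k != ord0) by move=> k; rewrite mem_filter mem_index_enum andbT.
have [A3 [r3 h3]] := col_sum _ _ s (fun k => C2 k ord0 * (1 - e)) A2
  (fun k => ltac:(by rewrite hs)).
have sum1 : \sum_(k <- s) A2 ord0 k * C2 k ord0 = 1 - e * C2 ord0 ord0.
  move/matrixP: AC2 => /(_ ord0 ord0); rewrite !mxE (bigD1 ord0) //= e2.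
  rewrite big_filter; move/(congr1 (fun x => x - e * C2 ord0 ord0)).
  by rewrite /= addrC addrK.
have u3 : A3 ord0 ord0 = e + (1 - e * C2 ord0 ord0) * (1 - e).
  rewrite h3 e2 -sum1 big_distrl /=; congr (_ + _).
  by apply: eq_bigr => k _; rewrite mulrA.
have [A4 [r4 h4]] := unit_to_one _ _ _ _ _ u3 (unit_aux _ _ (C2 ord0 ord0) ee).
have [A5 [r5 [h5 h5']]] := clear_row _ _ s _ h4 (fun k => ltac:(by rewrite hs)).
have h5r : forall k, k != ord0 -> A5 ord0 k = 0 by move=> k k0; rewrite h5' // hs k0.
have [A6 [r6 [h6 [h6r h6c]]]] := clear_col _ _ s _ h5 h5r (fun k => ltac:(by rewrite hs)).
exists A6; split.
  apply: (er_trans _ _ _ _ _ r12); apply: (er_trans _ _ _ _ _ r3); apply: (er_trans _ _ _ _ _ r4); exact: (er_trans _ _ _ _ _ r5 r6).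
by split => //; split => // k k0; rewrite h6c // hs k0.
Qed.
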